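(* Let $(V,\nu)$ and $(W,\mu)$ be strongly complete PN-spaces and let $T:V\to W$ be a linear operator with closed graph, i.e. whenever $x_n\to x$ strongly in $V$ and $Tx_n\to y$ strongly in $W$, then $y=Tx$. Then $T\in B(V,W)$.
   Context: A distance distribution function is a map $F:[-\infty,+\infty]\to[0,1]$ that is nondecreasing, left-continuous on $\mathbb{R}$, with $F(-\infty)=0$, $F(+\infty)=1$ and $F(0)=0$; the set of these is $\Delta^+$. $\mathcal{D}^+\subseteq\Delta^+$ denotes the proper ones, i.e. those with $\lim_{x\to+\infty}F(x)=1$. $H_0\in\Delta^+$ is $H_0(x)=0$ for $x\le 0$ and $H_0(x)=1$ for $x>0$. For $F,G\in\Delta^+$ let $\tau_M(F,G)(x)=\sup\{\min(F(s),G(t)) : s+t=x\}$. In this paper a PN-space $(V,\nu)$ is a real vector space $V$ with a map $\nu:V\to\Delta^+$, $p\mapsto\nu_p$, such that for all $p,q\in V$: $\nu_p=H_0$ iff $p=0$; $\nu_{p+q}\ge\tau_M(\nu_p,\nu_q)$ pointwise; and $\nu_{\alpha p}(x)=\nu_p(x/|\alpha|)$ for all real $\alpha\neq0$ and $x\ge 0$. Standing assumption: $\nu_p\in\mathcal{D}^+$ for every $p\in V$. For $x\in V$ and $w\in(0,1)$ put $\|x\|_w=\sup\{t\in\mathbb{R}:\nu_x(t)<w\}$; for each $w$ this is a norm on $V$, and $w\mapsto\|x\|_w$ is nondecreasing. The strong topology on $V$ is generated by the neighbourhoods $N_p(t)=\{q\in V:\nu_{p-q}(t)>1-t\}$, $p\in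 V$, $t>0$; equivalently the balls $\{x:\|x-p\|_w<r\}$ form a basis for it. A sequence $(p_n)$ converges strongly to $p$ if for every $t>0$ one has $p_n\in N_p(t)$ for all large $n$; it is strongly Cauchy if for every $t>0$ there is $N$ with $\nu_{p_n-p_m}(t)>1-t$ for all $m,n>N$. $(V,\nu)$ is strongly complete if every strongly Cauchy sequence converges strongly. $B(V,W)$ denotes the set of linear operators $V\to W$ that are continuous for the strong topologies. *)

(* Defs.v *)
From Stdlib Require Import Reals.
Open Scope R_scope.

Record RVS := {
  vcar :> Type;
  vzero : vcar;
  vadd : vcar -> vcar -> vcar;
  vopp : vcar -> vcar;
  vscal : R -> vcar -> vcar;
  vadd_assoc : forall x y z, vadd x (vadd y z) = vadd (vadd x y) z;
  vadd_comm : forall x y, vadd x y = vadd y x;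
  vadd_0 : forall x, vadd x vzero = x;
  vadd_opp : forall x, vadd x (vopp x) = vzero;
  vscal_assoc : forall a b x, vscal a (vscal b x) = vscal (a * b) x;
  vscal_1 : forall x, vscal 1 x = x;
  vscal_distr_v : forall a x y, vscal a (vadd x y) = vadd (vscal a x) (vscal a y);
  vscal_distr_s : forall a b x, vscal (a + b) x = vadd (vscal a x) (vscal b x)
}.

Definition vsub {V : RVS} (x y : V) : V := vadd V x (vopp V y).

(* ---------- Distance distribution functions ----------
   F is represented by its restriction to the reals; the values
   F(-oo) = 0 and F(+oo) = 1 are fixed by convention. *)
Definition is_ddf (F : R -> R) : Prop :=
  (forall x, 0 <= F x <= 1) /\
  (forall x y, x <= y -> F x <= F y) /\
  (forall x eps, 0 < eps -> exists d, 0 < d /\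
      forall y, x - d < y < x -> Rabs (F y - F x) < eps) /\
  F 0 = 0.

Definition is_proper_ddf (F : R -> R) : Prop :=
  is_ddf F /\
  (forall eps, 0 < eps -> exists M, forall x, M <= x -> Rabs (F x - 1) < eps).

Definition H0 (x : R) : R := if Rle_dec x 0 then 0 else 1.

(* nu_{p+q} >= tau_M(nu_p, nu_q) pointwise, i.e. for every x,
   sup { min(nu_p s, nu_q t) : s + t = x } <= nu_{p+q} x, which unfolds to:
   every element of the set is <= nu_{p+q} x. *)
Definition tauM_le (F G K : R -> R) : Prop :=
  forall s t, Rmin (F s) (G t) <= K (s + t).

Record PNSpace := {
  pn_vs :> RVS;
  pn_nu : pn_vs -> R -> R;
  pn_proper : forall p, is_proper_ddf (pn_nu p);
  pn_H0 : forall p, (forall x, pn_nu p x = H0 x) <-> p = vzero pn_vs;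
  pn_tri : forall p q, tauM_le (pn_nu p) (pn_nu q) (pn_nu (vadd pn_vs p q));
  pn_scal : forall (a : R) p x, a <> 0 -> 0 <= x ->
      pn_nu (vscal pn_vs a p) x = pn_nu p (x / Rabs a)
}.

Definition Nbd {V : PNSpace} (p : V) (t : R) (q : V) : Prop :=
  pn_nu V (vsub p q) t > 1 - t.

Definition strongly_open {V : PNSpace} (U : V -> Prop) : Prop :=
  forall p, U p -> exists t, 0 < t /\ forall q, Nbd p t q -> U q.

Definition strong_conv {V : PNSpace} (pn : nat -> V) (p : V) : Prop :=
  forall t, 0 < t -> exists N, forall n, (N <= n)%nat -> Nbd p t (pn n).

Definition strong_Cauchy {V : PNSpace} (pn : nat -> V) : Prop :=
  forall t, 0 < t -> exists N, forall m n, (N < m)%nat -> (N < n)%nat ->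
    pn_nu V (vsub (pn n) (pn m)) t > 1 - t.

Definition strongly_complete (V : PNSpace) : Prop :=
  forall pn : nat -> V, strong_Cauchy pn -> exists p, strong_conv pn p.

Definition is_linear {V W : RVS} (T : V -> W) : Prop :=
  (forall x y, T (vadd V x y) = vadd W (T x) (T y)) /\
  (forall a x, T (vscal V a x) = vscal W a (T x)).

Definition strongly_continuous {V W : PNSpace} (T : V -> W) : Prop :=
  forall U : W -> Prop, strongly_open U -> strongly_open (fun x => U (T x)).

Definition in_B {V W : PNSpace} (T : V -> W) : Prop :=
  is_linear T /\ strongly_continuous T.

(* Main.v *)
Require Import Defs.
From Stdlib Require Import Reals Lra Lia Classical ClassicalEpsilon.
Open Scope R_scope.

Section VA.
Variable V : RVS.
Notation "x + y" := (vadd V x y).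
Notation "- x" := (vopp V x).
Notation "0" := (vzero V).

Lemma add0l (x : V) : 0 + x = x.
Proof. rewrite vadd_comm; apply vadd_0. Qed.
Lemma addNl (x : V) : - x + x = 0.
Proof. rewrite vadd_comm; apply vadd_opp. Qed.
Lemma add_cancel (a b c : V) : a + b = a + c -> b = c.
Proof.
  intro H. rewrite <- (add0l b), <- (add0l c), <- (addNl a), <- !vadd_assoc, H; auto.
Qed.
Lemma opp_unique (a b : V) : a + b = 0 -> b = - a.
Proof. intro H. apply (add_cancel a). rewrite H, vadd_opp; auto. Qed.
Lemma opp_opp (x : V) : - - x = x.
Proof. symmetry. apply opp_unique. apply addNl. Qed.
Lemma opp_add (x y : V) : - (x + y) = - x + - y.
Proof.
  symmetry. apply opp_unique.
  rewrite (vadd_comm _ (- x)), vadd_assoc, <- (vadd_assoc _ x y), vadd_opp, vadd_0, vadd_opp; auto.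
Qed.
Lemma scal0 (x : V) : vscal V R0 x = 0.
Proof.
  apply (add_cancel (vscal V R0 x)). rewrite vadd_0, <- vscal_distr_s.
  f_equal; ring.
Qed.
Lemma scal_v0 (a : R) : vscal V a 0 = 0.
Proof.
  apply (add_cancel (vscal V a 0)). rewrite vadd_0, <- vscal_distr_v, vadd_0; auto.
Qed.
Lemma oppE (x : V) : - x = vscal V (-1)%R x.
Proof.
  symmetry. apply opp_unique.
  rewrite <- (vscal_1 _ x) at 1. rewrite <- vscal_distr_s.
  replace ((1 + -1)%R) with R0 by ring. apply scal0.
Qed.
Lemma swap (a b c : V) : (a + b) + c = (a + c) + b.
Proof. rewrite <- !vadd_assoc, (vadd_comm _ b c); auto. Qed.

Lemma I1 (x y z : V) : vsub x y + vsub y z = vsub x z.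
Proof. unfold vsub. rewrite vadd_assoc, <- (vadd_assoc _ x), addNl, vadd_0; auto. Qed.
Lemma I2 (x y : V) : - (vsub x y) = vsub y x.
Proof. unfold vsub. rewrite opp_add, opp_opp, vadd_comm; auto. Qed.
Lemma I3 (x : V) : vsub x x = 0.
Proof. apply vadd_opp. Qed.
Lemma I4 c (x y : V) : vscal V c (vsub x y) = vsub (vscal V c x) (vscal V c y).
Proof.
  unfold vsub. rewrite vscal_distr_v, !oppE, !vscal_assoc. f_equal. f_equal. ring.
Qed.
Lemma I5 (x w : V) : vsub (x + w) x = w.
Proof. unfold vsub. rewrite swap, vadd_opp, add0l; auto. Qed.
Lemma I10 (x r : V) : vsub x r + r = x.
Proof. unfold vsub. rewrite <- vadd_assoc, addNl, vadd_0; auto. Qed.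
Lemma I6 (x r : V) : vsub x (vsub x r) = r.
Proof. rewrite <- (I10 x r) at 1. apply I5. Qed.
Lemma I8 (x r r' : V) : vsub (vsub x r') (vsub x r) = vsub r r'.
Proof. rewrite <- (I1 x r r'). apply I5. Qed.
Lemma I9 (p q a b : V) : vsub (vsub p q) (vsub a b) = vsub (vsub p a) (vsub q b).
Proof.
  unfold vsub. rewrite !opp_add, !opp_opp, !vadd_assoc. f_equal.
  rewrite swap; auto.
Qed.
End VA.

Definition Bl {V : PNSpace} (t : R) (x : V) : Prop := pn_nu V x t > 1 - t.

Section NU.
Variable V : PNSpace.

Lemma nu_mono (p : V) s t : s <= t -> pn_nu V p s <= pn_nu V p t.
Proof. destruct (pn_proper V p) as [[_ [H _]] _]. apply H. Qed.

Lemma nu0 x : pn_nu V (vzero V) x = H0 x.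
Proof. apply (proj2 (pn_H0 V (vzero V))); auto. Qed.

Lemma Bl0 t : 0 < t -> Bl t (vzero V).
Proof. intro. unfold Bl. rewrite nu0. unfold H0. destruct (Rle_dec t 0); lra. Qed.

Lemma Bl_mono s t (x : V) : s <= t -> Bl s x -> Bl t x.
Proof. unfold Bl. intros H H'. pose proof (nu_mono x s t H). lra. Qed.

Lemma Bl_add s t (x y : V) : 0 < s -> 0 < t -> Bl s x -> Bl t y -> Bl (s + t) (vadd V x y).
Proof.
  unfold Bl. intros. pose proof (pn_tri V x y s t).
  assert (1 - (s + t) < Rmin (pn_nu V x s) (pn_nu V y t)) by (apply Rmin_glb_lt; lra).
  lra.
Qed.

Lemma Bl_scal c t (x : V) : Rabs c <= 1 -> 0 < t -> Bl t x -> Bl t (vscal V c x).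
Proof.
  intros Hc Ht Hx. destruct (Req_dec c 0) as [->|Hc0].
  - rewrite scal0. apply Bl0; auto.
  - unfold Bl in *. rewrite pn_scal by lra.
    assert (t <= t / Rabs c).
    { assert (0 < Rabs c) by (apply Rabs_pos_lt; auto).
      unfold Rdiv. apply (Rmult_le_reg_r (Rabs c)); auto.
      rewrite Rmult_assoc, Rinv_l by lra. nra. }
    pose proof (nu_mono x _ _ H). lra.
Qed.

Lemma Bl_opp t (x : V) : 0 < t -> Bl t x -> Bl t (vopp V x).
Proof. intros. rewrite oppE. apply Bl_scal; auto. rewrite Rabs_left by lra; lra. Qed.

Lemma Bl_tri s t (x y z : V) : 0 < s -> 0 < t ->
  Bl s (vsub x y) -> Bl t (vsub y z) -> Bl (s + t) (vsub x z).
Proof. intros. rewrite <- (I1 _ x y z). apply Bl_add; auto. Qed.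

Lemma Bl_sym t (x y : V) : 0 < t -> Bl t (vsub x y) -> Bl t (vsub y x).
Proof. intros. rewrite <- I2. apply Bl_opp; auto. Qed.

Lemma absorb t (y : V) : 0 < t -> exists n, Bl t (vscal V (/ (INR n + 1)) y).
Proof.
  intros Ht. destruct (pn_proper V y) as [_ Hlim].
  destruct (Hlim t Ht) as [M HM].
  destruct (INR_unbounded (M / t)) as [n Hn]. exists n.
  pose proof (pos_INR n).
  unfold Bl. rewrite pn_scal.
  - rewrite Rabs_right by (left; apply Rinv_0_lt_compat; lra).
    unfold Rdiv. rewrite Rinv_inv.
    assert (M <= t * (INR n + 1)).
    { apply (Rmult_lt_compat_r t) in Hn; auto. unfold Rdiv in Hn.
      rewrite Rmult_assoc, Rinv_l in Hn by lra. nra. }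
    specialize (HM _ H0). apply Rabs_def2 in HM. lra.
  - apply Rinv_neq_0_compat. lra.
  - lra.
Qed.

Lemma Bl_up r n (z : V) : 0 < r -> Bl (r / (INR n + 1)) z -> Bl r (vscal V (INR n + 1) z).
Proof.
  intros Hr Hz. pose proof (pos_INR n). unfold Bl in *.
  rewrite pn_scal by lra. rewrite Rabs_right by lra.
  assert (r / (INR n + 1) <= r).
  { unfold Rdiv. apply (Rmult_le_reg_r (INR n + 1)); [lra|].
    rewrite Rmult_assoc, Rinv_l by lra. nra. }
  lra.
Qed.
End NU.

Section BAIRE.
Variable V : PNSpace.
Variable F : nat -> V -> Prop.
Hypothesis Hcomp : strongly_complete V.
Hypothesis Hclosed : forall n x,
  (forall e, 0 < e -> exists f, F n f /\ Bl e (vsub x f)) -> F n x.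
Hypothesis Hcover : forall x, exists n, F n x.

Definition Spec k (p q : V * R) : Prop :=
  0 < snd p -> 0 < snd q /\ snd q <= snd p / 2 /\ snd q <= / (INR k + 1) /\
    Bl (snd p) (vsub (fst q) (fst p)) /\
    forall f, F k f -> ~ Bl (3 * snd q) (vsub f (fst q)).

Lemma baire : exists n x0 r, 0 < r /\ forall z, Bl r (vsub z x0) -> F n z.
Proof.
  apply NNPP; intro Hno.
  assert (H : forall n x0 r, 0 < r -> exists z, Bl r (vsub z x0) /\ ~ F n z).
  { intros n x0 r Hr. apply NNPP; intro Hc. apply Hno. exists n, x0, r. split; auto.
    intros z Hz. apply NNPP; intro Hz'. apply Hc. exists z; auto. }
  assert (Hopen : forall n z, ~ F n z -> exists e, 0 < e /\ forall f, F n f -> ~ Bl e (vsub f z)).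
  { intros n z Hz. apply NNPP; intro Hc. apply Hz. apply Hclosed. intros e He.
    apply NNPP; intro Hc2. apply Hc. exists e; split; auto. intros f Hf Hb.
    apply Hc2. exists f; split; auto. apply Bl_sym; auto. }
  assert (Hstep : forall k p, exists q, Spec k p q).
  { intros k [x r]. destruct (Rlt_dec 0 r) as [Hr|Hr].
    - destruct (H k x r Hr) as [z [Hz Hnz]]. destruct (Hopen k z Hnz) as [e [He He']].
      pose proof (pos_INR k).
      assert (0 < / (INR k + 1)) by (apply Rinv_0_lt_compat; lra).
      exists (z, Rmin (Rmin (r / 2) (/ (INR k + 1))) (e / 3)).
      unfold Spec; simpl; intros _.
      assert (Hm1 := Rmin_l (Rmin (r / 2) (/ (INR k + 1))) (e / 3)).
      assert (Hm2 := Rmin_r (Rmin (r / 2) (/ (INR k + 1))) (e / 3)).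
      assert (Hm3 := Rmin_l (r / 2) (/ (INR k + 1))).
      assert (Hm4 := Rmin_r (r / 2) (/ (INR k + 1))).
      split; [repeat apply Rmin_glb_lt; lra|].
      split; [lra|]. split; [lra|]. split; [exact Hz|].
      intros f Hf Hb. apply (He' f Hf). eapply Bl_mono; [|exact Hb]. lra.
    - exists (x, r). unfold Spec; simpl. intro; lra. }
  set (step := fun k p => proj1_sig (constructive_indefinite_description _ (Hstep k p))).
  assert (Hsp : forall k p, Spec k p (step k p)).
  { intros k p. unfold step. apply proj2_sig. }
  set (st := fix st k := match k with O => step O (vzero V, 1) | S j => step (S j) (st j) end).
  set (prev := fun k => match k with O => (vzero V, 1) | S j => st j end).
  assert (Hspec : forall k, Spec k (prev k) (st k)).
  { intros [|k]; apply Hsp. }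
  set (x := fun k => fst (st k)). set (r := fun k => snd (st k)).
  assert (Hpos : forall k, 0 < r k).
  { induction k.
    - destruct (Hspec 0%nat ltac:(simpl; lra)) as [? _]; auto.
    - destruct (Hspec (S k) IHk) as [? _]; auto. }
  assert (Hs : forall k, r k <= snd (prev k) / 2 /\ r k <= / (INR k + 1) /\
      Bl (snd (prev k)) (vsub (x k) (fst (prev k))) /\
      forall f, F k f -> ~ Bl (3 * r k) (vsub f (x k))).
  { intro k. assert (0 < snd (prev k)) by (destruct k; simpl; [lra| apply (Hpos k)]).
    destruct (Hspec k H0) as [_ HH]. exact HH. }
  assert (Hhalf : forall k, r (S k) <= r k / 2) by (intro k; apply (Hs (S k))).
  assert (Hsm : forall k, Bl (r k) (vsub (x (S k)) (x k))) by (intro k; apply (Hs (S k))).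
  assert (Hmono : forall j k, r (k + j)%nat <= r k).
  { induction j; intro k. - rewrite Nat.add_0_r; lra.
    - rewrite Nat.add_succ_r. pose proof (Hhalf (k + j)%nat). pose proof (Hpos (k+j)%nat).
      specialize (IHj k). lra. }
  assert (H3 : forall k j, Bl (2 * r k - 2 * r (S (k + j))) (vsub (x (S (k + j))) (x k))).
  { intros k j. induction j.
    - rewrite Nat.add_0_r. eapply Bl_mono; [|apply Hsm]. pose proof (Hhalf k). lra.
    - rewrite Nat.add_succ_r.
      assert (Hle : r (S (k + j)) <= r k / 2).
      { replace (S (k + j)) with (S k + j)%nat by lia. pose proof (Hmono j (S k)).
        pose proof (Hhalf k). lra. }
      pose proof (Hpos k) as P1. pose proof (Hpos (S (k+j))) as P2. pose proof (Hhalf (S (k + j))).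
      assert (P3 : 0 < 2 * r k - 2 * r (S (k + j))) by lra.
      eapply Bl_mono; [|apply (Bl_tri _ _ _ _ _ _ P2 P3 (Hsm (S (k+j))) IHj)].
      lra. }
  assert (H4 : forall k m, (k < m)%nat -> Bl (2 * r k) (vsub (x m) (x k))).
  { intros k m Hkm. replace m with (S (k + (m - S k)))%nat by lia.
    eapply Bl_mono; [|apply H3]. pose proof (Hpos (S (k + (m - S k)))). lra. }
  assert (Hcau : strong_Cauchy x).
  { intros t Ht. destruct (INR_unbounded (4 / t)) as [N HN]. exists N.
    intros m n Hm Hn. change (Bl t (vsub (x n) (x m))).
    pose proof (Hpos N). pose proof (pos_INR N).
    assert (r N < t / 4).
    { pose proof (proj1 (proj2 (Hs N))).
      assert (/ (INR N + 1) < t / 4).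
      { apply (Rmult_lt_reg_r (INR N + 1)); [lra|]. rewrite Rinv_l by lra.
        apply (Rmult_lt_compat_r t) in HN; auto. unfold Rdiv in HN.
        rewrite Rmult_assoc, Rinv_l in HN by lra. nra. }
      lra. }
    eapply Bl_mono; [|apply (Bl_tri _ (2 * r N) (2 * r N) _ (x N)); [lra|lra| apply H4; auto |
      apply Bl_sym; [lra| apply H4; auto]]].
    lra. }
  destruct (Hcomp x Hcau) as [p Hp].
  destruct (Hcover p) as [k Hk].
  destruct (Hp (r k) (Hpos k)) as [N HN].
  set (m := Nat.max N (S k)).
  assert (Hb1 : Bl (r k) (vsub p (x m))) by (apply HN; unfold m; lia).
  assert (Hb2 : Bl (2 * r k) (vsub (x m) (x k))) by (apply H4; unfold m; lia).
  pose proof (Hpos k).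
  apply (proj2 (proj2 (proj2 (Hs k))) p Hk).
  replace (3 * r k) with (r k + 2 * r k) by ring.
  apply Bl_tri with (x m); auto; lra.
Qed.
End BAIRE.

Section CG.
Variables V W : PNSpace.
Variable T : V -> W.
Hypothesis HcV : strongly_complete V.
Hypothesis HcW : strongly_complete W.
Hypothesis Hlin : is_linear T.
Hypothesis Hgr : forall (xn : nat -> V) (x : V) (y : W),
      strong_conv xn x -> strong_conv (fun n => T (xn n)) y -> y = T x.

Lemma T_sub x y : T (vsub x y) = vsub (T x) (T y).
Proof.
  destruct Hlin as [Ha Hs]. unfold vsub. rewrite Ha, !oppE, Hs; auto.
Qed.
Lemma T_scal c x : T (vscal V c x) = vscal W c (T x).
Proof. apply (proj2 Hlin). Qed.
Lemma T_zero : T (vzero V) = vzero W.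
Proof. rewrite <- (scal0 _ (vzero V)), T_scal, scal0; auto. Qed.

Lemma stepA t : 0 < t -> exists s, 0 < s /\ forall z, Bl s z ->
  forall e, 0 < e -> exists a, Bl t (T a) /\ Bl e (vsub z a).
Proof.
  intros Ht.
  set (C := fun x : V => forall e, 0 < e -> exists a, Bl (t / 2) (T a) /\ Bl e (vsub x a)).
  set (F := fun (n : nat) (x : V) => C (vscal V (/ (INR n + 1)) x)).
  assert (Hc : forall n, 0 < / (INR n + 1) <= 1).
  { intro n. pose proof (pos_INR n). split. apply Rinv_0_lt_compat; lra.
    rewrite <- Rinv_1. apply Rinv_le_contravar; lra. }
  assert (Hcl : forall n x, (forall e, 0 < e -> exists f, F n f /\ Bl e (vsub x f)) -> F n x).
  { intros n x Hx e He. destruct (Hx (e / 2)) as [f [Hf Hxf]]; [lra|].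
    destruct (Hf (e / 2)) as [a [Ha1 Ha2]]; [lra|]. exists a; split; auto.
    replace e with (e / 2 + e / 2) by field.
    apply Bl_tri with (vscal V (/ (INR n + 1)) f); try lra; auto.
    rewrite <- I4. apply Bl_scal; [|lra|auto].
    destruct (Hc n). rewrite Rabs_right; lra. }
  assert (Hcov : forall x, exists n, F n x).
  { intro x. destruct (absorb W (t / 2) (T x)) as [n Hn]; [lra|]. exists n.
    intros e He. exists (vscal V (/ (INR n + 1)) x). split.
    - rewrite T_scal; auto.
    - rewrite I3. apply Bl0; auto. }
  destruct (baire V F HcV Hcl Hcov) as [n [x0 [r [Hr Hball]]]].
  pose proof (pos_INR n).
  exists (r / (INR n + 1)). split. { apply Rdiv_lt_0_compat; lra. }
  intros z Hz e He.
  set (w := vscal V (INR n + 1) z).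
  assert (Hw : Bl r w) by (apply Bl_up; auto).
  assert (F1 : F n (vadd V x0 w)) by (apply Hball; rewrite I5; auto).
  assert (F2 : F n x0) by (apply Hball; rewrite I3; apply Bl0; auto).
  destruct (F1 (e / 2)) as [a1 [Ha1 Ha1']]; [lra|].
  destruct (F2 (e / 2)) as [a2 [Ha2 Ha2']]; [lra|].
  exists (vsub a1 a2). split.
  - rewrite T_sub. replace t with (t / 2 + t / 2) by field. unfold vsub.
    apply Bl_add; try lra; auto. apply Bl_opp; auto; lra.
  - assert (Hzz : z = vsub (vscal V (/ (INR n + 1)) (vadd V x0 w)) (vscal V (/ (INR n + 1)) x0)).
    { rewrite <- I4, I5. unfold w. rewrite vscal_assoc, Rinv_l by lra.
      rewrite vscal_1; auto. }
    rewrite Hzz, I9. replace e with (e / 2 + e / 2) by field. unfold vsub at 1.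
    apply Bl_add; try lra; auto. apply Bl_opp; auto; lra.
Qed.

Lemma pow2_ge n : INR n <= 2 ^ n.
Proof.
  induction n. simpl; lra. rewrite S_INR. simpl.
  assert (1 <= 2 ^ n) by (apply pow_R1_Rle; lra). lra.
Qed.

Lemma core t : 0 < t -> exists s, 0 < s /\ forall x, Bl s x -> Bl t (T x).
Proof.
  intros Ht.
  set (tau := fun n : nat => t / 2 ^ (n + 2)).
  assert (Htau : forall n, 0 < tau n).
  { intro n. unfold tau. apply Rdiv_lt_0_compat; auto. apply pow_lt; lra. }
  assert (HA : forall n, exists s, 0 < s /\ forall z, Bl s z ->
    forall e, 0 < e -> exists a, Bl (tau n) (T a) /\ Bl e (vsub z a)).
  { intro n. apply stepA; auto. }
  set (sf := fun n => proj1_sig (constructive_indefinite_description _ (HA n))).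
  assert (Hsf : forall n, 0 < sf n /\ forall z, Bl (sf n) z ->
    forall e, 0 < e -> exists a, Bl (tau n) (T a) /\ Bl e (vsub z a)).
  { intro n. unfold sf. apply proj2_sig. }
  set (sg := fun n => Rmin (sf n) (/ 2 ^ n)).
  assert (Hsg : forall n, 0 < sg n /\ sg n <= sf n /\ sg n <= / 2 ^ n).
  { intro n. unfold sg. split; [apply Rmin_glb_lt; [apply Hsf| apply Rinv_0_lt_compat, pow_lt; lra]|].
    split; [apply Rmin_l| apply Rmin_r]. }
  assert (Hg : forall n z, exists a, Bl (sg n) z -> Bl (tau n) (T a) /\ Bl (sg (S n)) (vsub z a)).
  { intros n z. destruct (classic (Bl (sg n) z)) as [Hz|Hz].
    - destruct (proj2 (Hsf n) z (Bl_mono _ _ _ _ (proj1 (proj2 (Hsg n))) Hz) (sg (S n)) (proj1 (Hsg (S n))))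
        as [a Ha]. exists a; auto.
    - exists z; tauto. }
  set (g := fun n z => proj1_sig (constructive_indefinite_description _ (Hg n z))).
  assert (Hgs : forall n z, Bl (sg n) z -> Bl (tau n) (T (g n z)) /\ Bl (sg (S n)) (vsub z (g n z))).
  { intros n z. unfold g. apply proj2_sig. }
  exists (sg 0%nat). split; [apply Hsg|].
  intros x Hx.
  set (r := fix r n := match n with O => x | S k => vsub (r k) (g k (r k)) end).
  assert (Hr : forall n, Bl (sg n) (r n)).
  { induction n; simpl; auto. apply (Hgs n (r n) IHn). }
  set (u := fun n => vsub x (r n)).
  assert (Hdu : forall n, vsub (T (u (S n))) (T (u n)) = T (g n (r n))).
  { intro n. rewrite <- T_sub. unfold u. rewrite I8. simpl. rewrite I6; auto. }
  assert (Hdb : forall n, Bl (tau n) (vsub (T (u (S n))) (T (u n)))).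
  { intro n. rewrite Hdu. apply (Hgs n (r n) (Hr n)). }
  assert (Hcl : forall n k, Bl (t / 2 ^ (n + 1) - t / 2 ^ (n + k + 2)) (vsub (T (u (n + S k)%nat)) (T (u n)))).
  { intros n k. induction k.
    - rewrite Nat.add_0_r, (pow_add 2 n 1), (pow_add 2 n 2).
      replace (n + 1)%nat with (S n) by lia.
      eapply Bl_mono; [|apply Hdb]. unfold tau. rewrite pow_add.
      simpl. right; field. apply pow_nonzero; lra.
    - replace (n + S (S k))%nat with (S (n + S k)) by lia.
      assert (P1 : 0 < t / 2 ^ (n + 1) - t / 2 ^ (n + k + 2)).
      { replace (n + k + 2)%nat with (n + 1 + S k)%nat by lia. rewrite (pow_add 2 (n + 1) (S k)).
        assert (Q1 : 0 < 2 ^ (n + 1)) by (apply pow_lt; lra).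
        assert (Q2 : 2 ^ 1 <= 2 ^ S k) by (apply Rle_pow; lra || lia).
        rewrite pow_1 in Q2. unfold Rdiv. rewrite Rinv_mult.
        assert (Q3 : 0 < / 2 ^ (n + 1)) by (apply Rinv_0_lt_compat; lra).
        assert (Q4 : / 2 ^ S k <= / 2) by (apply Rinv_le_contravar; lra).
        assert (Q5 : 0 < t * / 2 ^ (n + 1)) by (apply Rmult_lt_0_compat; lra).
        replace (t * / 2 ^ (n + 1) - t * (/ 2 ^ (n + 1) * / 2 ^ S k)) with
          ((t * / 2 ^ (n + 1)) * (1 - / 2 ^ S k)) by ring.
        apply Rmult_lt_0_compat; lra. }
      eapply Bl_mono; [|apply (Bl_tri _ _ _ _ _ _ (Htau _) P1 (Hdb _) IHk)].
      unfold tau. replace (S (n + S k) + 2)%nat with (S (n + k + 2) + 1)%nat by lia.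
      replace (n + S k + 2)%nat with (S (n + k + 2)) by lia.
      rewrite pow_add. simpl. right; field; repeat split; apply pow_nonzero; lra. }
  assert (Hcl2 : forall n m, (n < m)%nat -> Bl (t / 2 ^ (n + 1)) (vsub (T (u m)) (T (u n)))).
  { intros n m Hnm. replace m with (n + S (m - S n))%nat by lia.
    eapply Bl_mono; [|apply Hcl]. assert (0 < t / 2 ^ (n + (m - S n) + 2)).
    { apply Rdiv_lt_0_compat; auto. apply pow_lt; lra. } lra. }
  assert (Hsmall : forall e, 0 < e -> exists N, t / 2 ^ (N + 1) < e /\ / 2 ^ N < e).
  { intros e He. destruct (INR_unbounded (Rmax (t / e) (/ e))) as [N HN]. exists N.
    pose proof (pow2_ge N). pose proof (Rmax_l (t / e) (/ e)). pose proof (Rmax_r (t / e) (/ e)).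
    assert (P : 0 < 2 ^ N) by (apply pow_lt; lra).
    rewrite pow_add. simpl. split.
    - apply (Rmult_lt_reg_r (2 ^ N * (2 * 1))); [nra|]. unfold Rdiv.
      rewrite Rmult_assoc, Rinv_l by nra.
      assert (t / e < 2 ^ N) by lra. apply (Rmult_lt_compat_r e) in H2; auto.
      unfold Rdiv in H2. rewrite Rmult_assoc, Rinv_l in H2 by lra. nra.
    - apply (Rmult_lt_reg_r (2 ^ N)); [nra|]. rewrite Rinv_l by lra.
      assert (/ e < 2 ^ N) by lra. apply (Rmult_lt_compat_r e) in H2; auto.
      rewrite Rinv_l in H2 by lra. nra. }
  assert (HcauW : strong_Cauchy (fun n => T (u n))).
  { intros e He. destruct (Hsmall (e / 2)) as [N [HN1 _]]; [lra|]. exists N.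
    intros m n Hm Hn. change (Bl e (vsub (T (u n)) (T (u m)))).
    assert (0 < t / 2 ^ (N + 1)) by (apply Rdiv_lt_0_compat; auto; apply pow_lt; lra).
    eapply Bl_mono; [|apply (Bl_tri _ _ _ _ (T (u N)) _ H H (Hcl2 N n Hn))].
    lra. apply Bl_sym; auto. }
  destruct (HcW _ HcauW) as [y Hy].
  assert (Hux : strong_conv u x).
  { intros e He. destruct (Hsmall e He) as [N [_ HN]]. exists N. intros n Hn.
    unfold Nbd, u. rewrite I6. change (Bl e (r n)).
    eapply Bl_mono; [|apply Hr]. pose proof (Hsg n).
    assert (/ 2 ^ n <= / 2 ^ N).
    { apply Rinv_le_contravar. apply pow_lt; lra. apply Rle_pow; lra || lia. }
    lra. }
  pose proof (Hgr u x y Hux Hy) as Hyx.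
  rewrite <- Hyx.
  destruct (Hy (t / 2)) as [N HN]; [lra|].
  specialize (HN (S N) ltac:(lia)). change (Bl (t / 2) (vsub y (T (u (S N))))) in HN.
  assert (H1 : Bl (t / 2) (vsub (T (u (S N))) (T (u 0%nat)))).
  { eapply Bl_mono; [|apply Hcl2; lia]. simpl. right; field. }
  assert (Hu0 : T (u 0%nat) = vzero W).
  { unfold u. simpl. rewrite I3. apply T_zero. }
  assert (Pt : 0 < t / 2) by lra.
  assert (Hf := Bl_tri _ _ _ _ _ _ Pt Pt HN H1).
  rewrite Hu0 in Hf. unfold vsub in Hf. rewrite <- (vadd_0 W y).
  replace t with (t / 2 + t / 2) by field.
  assert (Hz : vopp W (vzero W) = vzero W).
  { symmetry. apply opp_unique. apply vadd_0. }
  rewrite Hz in Hf. exact Hf.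
Qed.
End CG.

Theorem theorem4p10 (V W : PNSpace) (T : V -> W) :
  strongly_complete V -> strongly_complete W ->
  is_linear T ->
  (forall (xn : nat -> V) (x : V) (y : W),
      strong_conv xn x -> strong_conv (fun n => T (xn n)) y -> y = T x) ->
  in_B T.
Proof.
  intros HcV HcW Hlin Hgr. split; auto.
  intros U HU p Hp. destruct (HU (T p) Hp) as [t [Ht HtU]].
  destruct (core V W T HcV HcW Hlin Hgr t Ht) as [s [Hs Hcore]].
  exists s. split; auto. intros q Hq. apply HtU.
  unfold Nbd. rewrite <- (T_sub V W T Hlin). apply Hcore. exact Hq.
Qed.
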